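(* Let $\alpha>-1$, $M\ge0$, $N\ge0$, and for $n\ge1$ let $$y(x)=L_n^{\alpha,M,N}(x)=A_0L_n^{(\alpha)}(x)+A_1\frac{d}{dx}L_n^{(\alpha)}(x)+A_2\frac{d^2}{dx^2}L_n^{(\alpha)}(x),$$ where $$A_0=1+M\binom{n+\alpha}{n-1}+\frac{n(\alpha+2)-(\alpha+1)}{(\alpha+1)(\alpha+3)}N\binom{n+\alpha}{n-2}+\frac{MN}{(\alpha+1)(\alpha+2)}\binom{n+\alpha}{n-1}\binom{n+\alpha+1}{n-2},$$ $$A_1=M\binom{n+\alpha}{n}+\frac{n-1}{\alpha+1}N\binom{n+\alpha}{n-1}+\frac{2MN}{(\alpha+1)^2}\binom{n+\alpha}{n}\binom{n+\alpha+1}{n-2},$$ $$A_2=\frac{N}{\alpha+1}\binom{n+\alpha}{n-1}+\frac{MN}{(\alpha+1)^2}\binom{n+\alpha}{n}\binom{n+\alpha+1}{n-1}.$$ Define for $i=0,1,2,\ldots$ $$b_i^*(\alpha,x)=\frac{1}{i!}\sum_{j=0}^{i}(-1)^j\binom{i}{j}(\alpha+1)_{i-j}x^j,\qquad c_i^*(\alpha,x)=\frac{(-1)^i}{i!}x^i.$$ Then for every $n=1,2,3,\ldots$ the polynomial $y=L_n^{\alpha,M,N}$ satisfies $$\sum_{i=0}^{\infty}b_i^*(\alpha,x)y^{(i)}(x)+M\sum_{i=0}^{\infty}c_i^*(\alpha,x)y^{(i)}(x)=0 .$$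
   Context: $L_n^{(\alpha)}(x)=\sum_{k=0}^n\frac{(-1)^k}{k!}\binom{n+\alpha}{n-k}x^k$ denotes the classical Laguerre polynomial. $(c)_m$ is the Pochhammer symbol, $\binom{a}{m}$ the generalized binomial coefficient for real $a$, with $\binom{a}{m}=0$ when $m$ is a negative integer. The polynomials $L_n^{\alpha,M,N}$ so defined are orthogonal with respect to the Sobolev inner product $\langle f,g\rangle=\frac{1}{\Gamma(\alpha+1)}\int_0^\infty x^\alpha e^{-x}f(x)g(x)\,dx+Mf(0)g(0)+Nf'(0)g'(0)$. Since $y$ is a polynomial, the sums are finite. *)

(* Defs.v *)
From HB Require Import structures.
From mathcomp Require Import all_boot all_order all_algebra.
Set Implicit Arguments. Unset Strict Implicit. Unset Printing Implicit Defensive.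
Import Order.TTheory GRing.Theory Num.Theory.
Local Open Scope ring_scope.

Definition poch {R : pzRingType} (c : R) (m : nat) : R :=
  \prod_(i < m) (c + i%:R).

Definition gbinom {R : fieldType} (a : R) (m : nat) : R :=
  (\prod_(i < m) (a - i%:R)) / (m`!)%:R.

Definition gbinomz {R : fieldType} (a : R) (m : int) : R :=
  match m with Posz k => gbinom a k | Negz _ => 0 end.

Definition laguerre {R : fieldType} (n : nat) (alpha : R) : {poly R} :=
  \sum_(k < n.+1)
     (((-1) ^+ k / (k`!)%:R * gbinom (n%:R + alpha) (n - k)%N) *: 'X^k).

Section Coefs.
Variables (R : fieldType) (alpha M N : R) (n : nat).
Let na : R := n%:R + alpha.
Let nz : int := n%:Z.

Definition A0 : R :=
  1 + M * gbinomz na (nz - 1)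
  + (n%:R * (alpha + 2) - (alpha + 1)) / ((alpha + 1) * (alpha + 3))
      * N * gbinomz na (nz - 2)
  + M * N / ((alpha + 1) * (alpha + 2))
      * gbinomz na (nz - 1) * gbinomz (na + 1) (nz - 2).

Definition A1 : R :=
  M * gbinomz na nz
  + (n%:R - 1) / (alpha + 1) * N * gbinomz na (nz - 1)
  + 2 * M * N / (alpha + 1) ^+ 2 * gbinomz na nz * gbinomz (na + 1) (nz - 2).

Definition A2 : R :=
  N / (alpha + 1) * gbinomz na (nz - 1)
  + M * N / (alpha + 1) ^+ 2 * gbinomz na nz * gbinomz (na + 1) (nz - 1).
End Coefs.

Definition laguerreMN {R : fieldType} (alpha M N : R) (n : nat) : {poly R} :=
  let L := laguerre n alpha in
  A0 alpha M N n *: L + A1 alpha M N n *: L^`() + A2 alpha M N n *: L^`(2).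

Definition bstar {R : fieldType} (alpha x : R) (i : nat) : R :=
  (i`!)%:R^-1 * \sum_(j < i.+1)
      ((-1) ^+ j * ('C(i, j))%:R * poch (alpha + 1) (i - j)%N * x ^+ j).

Definition cstar {R : fieldType} (x : R) (i : nat) : R :=
  (-1) ^+ i / (i`!)%:R * x ^+ i.

(* Main.v *)
Require Import Defs.
From HB Require Import structures.
From mathcomp Require Import all_boot all_order all_algebra.
From mathcomp Require Import ring lra.
Import Order.TTheory GRing.Theory Num.Theory.
Local Open Scope ring_scope.

Section P1.
Variable R : realFieldType.

Lemma derivn_big (p : {poly R}) K : (size p <= K)%N -> p^`(K) = 0.
Proof.
move=> hK; apply/polyP => i; rewrite coef_derivn coef0.
by move/leq_sizeP: hK => ->; rewrite ?mul0rn // leq_addr.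
Qed.

Lemma deriv0_const (q : {poly R}) x : q^`() = 0 -> q.[x] = q.[0].
Proof.
move=> h; have -> : q = (q`_0)%:P.
  apply/polyP => i; rewrite coefC; case: i => [|i] //=.
  have := congr1 (fun r : {poly R} => r`_i) h; rewrite coef_deriv coef0 /= => /eqP.
  by rewrite -mulr_natr mulf_eq0 pnatr_eq0 orbF => /eqP.
by rewrite !hornerC.
Qed.

Lemma telescope (bp : nat -> {poly R}) (p : {poly R}) K :
  (bp 0%N)^`() = 0 -> (forall i, (bp i.+1)^`() = - bp i) -> (size p <= K)%N ->
  (\sum_(i < K) bp i * p^`(i))^`() = 0.
Proof.
move=> h0 hS hK.
have E : forall K, (\sum_(i < K) bp i * p^`(i))^`() =
   if K is K'.+1 then bp K' * p^`(K) else 0.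
  elim=> [|k IH]; first by rewrite big_ord0 deriv0.
  rewrite big_ord_recr /= derivD IH derivM -derivnS.
  case: k {IH} => [|k]; first by rewrite h0 mul0r !add0r.
  by rewrite hS mulNr addrA addrN add0r.
by rewrite E; case: K hK => [|K] hK //; rewrite derivn_big ?mulr0.
Qed.

Lemma Q_eval (bp : nat -> {poly R}) (p : {poly R}) K x :
  (bp 0%N)^`() = 0 -> (forall i, (bp i.+1)^`() = - bp i) -> (size p <= K)%N ->
  \sum_(i < K) (bp i).[x] * (p^`(i)).[x] = \sum_(i < K) (bp i).[0] * (p^`(i)).[0].
Proof.
move=> h0 hS hK.
have := @deriv0_const _ x (@telescope bp p K h0 hS hK).
by rewrite !horner_sum; under eq_bigr do rewrite hornerM; under [RHS]eq_bigr do rewrite hornerM.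
Qed.

Lemma derivn_at0 (p : {poly R}) i : (p^`(i)).[0] = p`_i * (i`!)%:R.
Proof. by rewrite horner_coef0 coef_derivn addn0 ffactnn mulr_natr. Qed.

Definition bp (alpha : R) (i : nat) : {poly R} :=
  \poly_(j < i.+1) ((i`!)%:R^-1 * ((-1) ^+ j * ('C(i, j))%:R * poch (alpha + 1) (i - j)%N)).

Definition cp (i : nat) : {poly R} := ((-1) ^+ i / (i`!)%:R) *: 'X^i.

Lemma bp_eval alpha x i : (bp alpha i).[x] = bstar alpha x i.
Proof.
rewrite /bp horner_poly /bstar big_distrr /=; apply: eq_bigr => j _.
by rewrite !mulrA.
Qed.

Lemma cp_eval x i : (cp i).[x] = cstar x i.
Proof. by rewrite /cp hornerZ hornerXn. Qed.

Lemma fact_neq0 k : ((k`!)%:R : R) != 0.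
Proof. by rewrite pnatr_eq0 -lt0n fact_gt0. Qed.

Lemma bp0 alpha : (bp alpha 0)^`() = 0.
Proof.
apply/polyP => i; rewrite coef_deriv coef_poly coef0 /=.
by rewrite mul0rn.
Qed.

Lemma bpS alpha i : (bp alpha i.+1)^`() = - bp alpha i.
Proof.
apply/polyP => l; rewrite coef_deriv coefN !coef_poly ltnS.
case: ltnP => hl; last by rewrite mul0rn oppr0.
rewrite subSS.
have hC : (('C(i.+1, l.+1))%:R : R) = (i.+1)%:R * ('C(i, l))%:R / (l.+1)%:R.
  have := mul_bin_diag i.+1 l => /(congr1 (fun k => (k%:R : R))).
  rewrite !natrM /= => ->; by rewrite mulrAC divff ?mul1r // pnatr_eq0.
rewrite -mulr_natr hC factS natrM exprS.
have h1 : ((i.+1)%:R : R) != 0 by rewrite pnatr_eq0.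
have h2 : ((l.+1)%:R : R) != 0 by rewrite pnatr_eq0.
have h3 := fact_neq0 i.
field.
by rewrite !nat1r h1 h2 h3.
Qed.

Lemma cp0 : (cp 0)^`() = 0.
Proof. by rewrite /cp derivZ derivXn mulr0n scaler0. Qed.

Lemma cpS i : (cp i.+1)^`() = - cp i.
Proof.
rewrite /cp derivZ derivXn /= -scaler_nat scalerA -scaleNr; congr (_ *: _).
rewrite factS natrM exprS.
have h1 : ((i.+1)%:R : R) != 0 by rewrite pnatr_eq0.
have h3 := fact_neq0 i.
field.
by rewrite ?nat1r h1 h3.
Qed.

End P1.
Section P2.
Variable R : realFieldType.

Lemma fact_neq0' k : ((k`!)%:R : R) != 0.
Proof. by rewrite pnatr_eq0 -lt0n fact_gt0. Qed.

Lemma natS_neq0 k : ((k.+1)%:R : R) != 0.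
Proof. by rewrite pnatr_eq0. Qed.

Lemma gbinom0 (a : R) : gbinom a 0 = 1.
Proof. by rewrite /gbinom big_ord0 fact0 divr1. Qed.

Lemma gbinomS (a : R) m : gbinom a m.+1 * (m.+1)%:R = gbinom a m * (a - m%:R).
Proof.
rewrite /gbinom big_ord_recr factS natrM /=.
have := fact_neq0' m; have := natS_neq0 m => h1 h2.
field. by rewrite ?nat1r h1 h2.
Qed.

Lemma gbinom_up (a : R) m : gbinom (a + 1) m * (a + 1 - m%:R) = gbinom a m * (a + 1).
Proof.
have E : \prod_(i < m.+1) (a + 1 - i%:R) = (a + 1) * \prod_(i < m) (a - i%:R).
  rewrite big_ord_recl /= subr0; congr (_ * _); apply: eq_bigr => i _.
  rewrite /bump /= add1n -natr1; ring.
have E2 : \prod_(i < m.+1) (a + 1 - i%:R) = \prod_(i < m) (a + 1 - i%:R) * (a + 1 - m%:R).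
  by rewrite big_ord_recr.
rewrite /gbinom mulrAC -E2 E; ring.
Qed.

Lemma gbinomN (c : R) k : gbinom (- c) k = (-1) ^+ k / (k`!)%:R * poch c k.
Proof.
rewrite /gbinom /poch.
have -> : \prod_(i < k) (- c - i%:R) = \prod_(i < k) - (c + i%:R).
  by apply: eq_bigr => i _; rewrite opprD.
by rewrite prodrN card_ord mulrAC.
Qed.

Lemma gbinom_nat m k : gbinom (m%:R : R) k = ('C(m, k))%:R.
Proof.
elim: k => [|k IH]; first by rewrite gbinom0 bin0.
apply: (mulIf (natS_neq0 k)).
rewrite gbinomS IH -natrM mulnC mul_bin_left natrM mulrC.
case: (leqP k m) => hk; first by rewrite natrB.
by rewrite bin_small // !mulr0.
Qed.

Lemma vander (a b : R) m :
  \sum_(k < m.+1) gbinom b k * gbinom a (m - k) = gbinom (a + b) m.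
Proof.
elim: m => [|m IH].
  by rewrite big_ord1 !gbinom0 mulr1.
apply: (mulIf (natS_neq0 m)).
rewrite gbinomS -IH big_distrl /= big_distrl /=.
have E1 : \sum_(k < m.+2) gbinom b k * gbinom a (m.+1 - k) * (m.+1)%:R =
   \sum_(k < m.+2) gbinom b k * gbinom a (m.+1 - k) * k%:R +
   \sum_(k < m.+2) gbinom b k * gbinom a (m.+1 - k) * (m.+1 - k)%:R.
  rewrite -big_split /=; apply: eq_bigr => k _.
  by rewrite -mulrDr -natrD subnKC // -ltnS.
have Z : forall (x : R) (i : 'I_m.+2), i = ord0 -> x * (i : nat)%:R = 0 by move=> x i ->; rewrite mulr0.
rewrite E1 big_ord_recl /= mulr0 add0r (big_ord_recr m.+1) /= subnn mulr0 addr0.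
rewrite -big_split /=; apply: eq_bigr => k _.
have hk : (k <= m)%N by rewrite -ltnS.
rewrite /bump /= add1n subSS subSn //.
rewrite -(mulrA (gbinom b k.+1)) (mulrC _ (k.+1)%:R) mulrA gbinomS.
rewrite -(mulrA _ (gbinom a (m - k).+1)) gbinomS natrB //.
ring.
Qed.


Lemma lag_coef n (alpha : R) j : (laguerre n alpha)`_j =
  if (j < n.+1)%N then (-1) ^+ j / (j`!)%:R * gbinom (n%:R + alpha) (n - j) else 0.
Proof.
have -> : laguerre n alpha = \poly_(k < n.+1)
   ((-1) ^+ k / (k`!)%:R * gbinom (n%:R + alpha) (n - k)) by rewrite poly_def.
by rewrite coef_poly.
Qed.

Lemma TL0 m (alpha : R) :
  \sum_(k < m.+2) poch (alpha + 1) k * (laguerre m.+1 alpha)`_k = 0.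
Proof.
have -> : \sum_(k < m.+2) poch (alpha + 1) k * (laguerre m.+1 alpha)`_k =
  \sum_(k < m.+2) gbinom (- (alpha + 1)) k * gbinom ((m.+1)%:R + alpha) (m.+1 - k).
  apply: eq_bigr => k _; rewrite lag_coef ltn_ord gbinomN; ring.
rewrite vander (_ : (m.+1)%:R + alpha + - (alpha + 1) = m%:R); last first.
  by rewrite -natr1; ring.
by rewrite gbinom_nat bin_small.
Qed.

Lemma TL1 m (alpha : R) :
  \sum_(k < m.+2) poch (alpha + 1) k * (laguerre m.+1 alpha)^`()`_k = -1.
Proof.
rewrite big_ord_recr /= coef_deriv lag_coef ltnn mul0rn mulr0 addr0.
have -> : \sum_(k < m.+1) poch (alpha + 1) k * (laguerre m.+1 alpha)^`()`_k =
  - \sum_(k < m.+1) gbinom (- (alpha + 1)) k * gbinom ((m.+1)%:R + alpha) (m - k).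
  rewrite -sumrN; apply: eq_bigr => k _.
  rewrite coef_deriv lag_coef ltnS ltn_ord subSS gbinomN -mulr_natr factS natrM exprS.
  have := fact_neq0' k; have := natS_neq0 k => h1 h2.
  field. by rewrite ?nat1r h1 h2.
rewrite vander (_ : (m.+1)%:R + alpha + - (alpha + 1) = m%:R); last first.
  by rewrite -natr1; ring.
by rewrite gbinom_nat binn.
Qed.

Lemma TL2 n (alpha : R) : (1 <= n)%N ->
  \sum_(k < n.+1) poch (alpha + 1) k * (laguerre n alpha)^`(2)`_k = (n.-1)%:R.
Proof.
have D2 : forall (p : {poly R}) k, p^`(2)`_k = p`_(k.+2) *+ k.+2 *+ k.+1.
  by move=> p k; rewrite derivnS derivn1 !coef_deriv.
case: n => [//|[|m]] _.
  by rewrite big1 // => k _; rewrite D2 lag_coef ltnS ltnS ltn0 !mul0rn mulr0.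
rewrite big_ord_recr /= D2 lag_coef ltnS ltnS ltnNge leqnSn /= !mul0rn mulr0 addr0.
rewrite big_ord_recr /= D2 lag_coef ltnS ltnS ltnn /= !mul0rn mulr0 addr0.
have -> : \sum_(k < m.+1) poch (alpha + 1) k * (laguerre m.+2 alpha)^`(2)`_k =
  \sum_(k < m.+1) gbinom (- (alpha + 1)) k * gbinom ((m.+2)%:R + alpha) (m - k).
  apply: eq_bigr => k _.
  rewrite D2 lag_coef ifT; last by rewrite !ltnS -ltnS ltn_ord.
  rewrite !subSS gbinomN -mulrnA -mulr_natr !factS !natrM !exprS.
  have := fact_neq0' k; have := natS_neq0 k; have := natS_neq0 k.+1 => h0 h1 h2.
  have e2 : (2 : R) + k%:R = (k.+2)%:R by rewrite -[in RHS]addn2 natrD addrC.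
  field. by rewrite e2 nat1r h0 h1 h2.
rewrite vander (_ : (m.+2)%:R + alpha + - (alpha + 1) = (m.+1)%:R); last first.
  by rewrite -natr1; ring.
by rewrite gbinom_nat binSn.
Qed.

End P2.
Lemma zsub (m k : nat) : (k <= m)%N -> (m%:Z - k%:Z = (m - k)%N%:Z)%R.
Proof. by move=> h; rewrite subzn. Qed.
Lemma a1 (R : fieldType) (a : R) m : gbinomz a ((m.+1)%:Z - 1) = gbinom a m.
Proof. by rewrite (@zsub m.+1 1) // subn1. Qed.
Lemma a2 (R : fieldType) (a : R) m : gbinomz a ((m.+2)%:Z - 2) = gbinom a m.
Proof. by rewrite (@zsub m.+2 2) // subn2. Qed.
Lemma a3 (R : fieldType) (a : R) : gbinomz a ((1%N)%:Z - 2) = 0.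
Proof. by []. Qed.

Arguments bp {R}.

Lemma gbinom1 (R : realFieldType) (a : R) : gbinom a 1 = a.
Proof. by rewrite /gbinom big_ord1 /= subr0 divr1. Qed.

Arguments cp {R}.

Lemma coef_derivn2 (R : realFieldType) (p : {poly R}) k : p^`(2)`_k = p`_(k.+2) *+ k.+2 *+ k.+1.
Proof. by rewrite derivnS derivn1 !coef_deriv. Qed.

Lemma bp_at0 (R : realFieldType) (alpha : R) i : (bp alpha i).[0] = poch (alpha + 1) i / (i`!)%:R.
Proof.
rewrite /bp horner_poly big_ord_recl /= big1 => [|j _]; last by rewrite expr0n /= mulr0.
by rewrite !expr0 mulr1 addr0 bin0 subn0 !mul1r mulrC.
Qed.

Lemma cp_sum0 (R : realFieldType) (p : {poly R}) K :
  \sum_(i < K.+1) (cp i).[0] * (p^`(i)).[0] = p`_0.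
Proof.
rewrite big_ord_recl big1 => [|i _]; last by rewrite /cp hornerZ hornerXn expr0n /= mulr0 mul0r.
by rewrite /cp hornerZ hornerXn !expr0 /= fact0 divr1 !mul1r addr0 horner_coef0.
Qed.

Lemma sum_size (R : realFieldType) (w : nat -> R) (p : {poly R}) K : (size p <= K)%N ->
  \sum_(i < K) w i * p`_i = \sum_(i < size p) w i * p`_i.
Proof.
move=> h; rewrite [RHS](big_ord_widen _ (fun i => w i * p`_i) h) [RHS]big_mkcond /=.
apply: eq_bigr => i _; case: ltnP => // hi.
by rewrite nth_default // mulr0.
Qed.

Theorem theorem3 (R : realFieldType) (alpha M N : R)
  (halpha : -1 < alpha) (hM : 0 <= M) (hN : 0 <= N) (n : nat) (hn : (1 <= n)%N)
  (K : nat) (hK : (size (laguerreMN alpha M N n) <= K)%N) (x : R) :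
  let y := laguerreMN alpha M N n in
  \sum_(i < K) bstar alpha x i * (y^`(i)).[x]
    + M * \sum_(i < K) cstar x i * (y^`(i)).[x] = 0.
Proof.
move=> y.
case: K hK => [|K] hK; first by rewrite !big_ord0 mulr0 addr0.
have Eb : \sum_(i < K.+1) bstar alpha x i * (y^`(i)).[x] = \sum_(i < K.+1) poch (alpha+1) i * y`_i.
  rewrite (eq_bigr (fun i : 'I_K.+1 => (bp alpha i).[x] * (y^`(i)).[x])); last by move=> i _; rewrite bp_eval.
  rewrite (@Q_eval R (bp alpha) y K.+1 x (bp0 R alpha) (@bpS R alpha) hK).
  apply: eq_bigr => i _; rewrite bp_at0 derivn_at0.
  have := fact_neq0 R i => h; field; exact: h.
have Ec : \sum_(i < K.+1) cstar x i * (y^`(i)).[x] = y`_0.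
  rewrite (eq_bigr (fun i : 'I_K.+1 => (cp i).[x] * (y^`(i)).[x])); last by move=> i _; rewrite cp_eval.
  by rewrite (@Q_eval R cp y K.+1 x (cp0 R) (@cpS R) hK) cp_sum0.
have Hsz : (size y <= n.+1)%N.
  apply/leq_sizeP => j hj; rewrite /y /laguerreMN !coefD !coefZ coef_deriv coef_derivn2 !lag_coef.
  rewrite !ifN ?mul0rn ?mulr0 ?addr0 //; rewrite -leqNgt; apply: leq_trans hj _; by rewrite ?leqW.
rewrite Eb Ec (@sum_size R (poch (alpha+1)) y K.+1 hK) -(@sum_size R (poch (alpha+1)) y n.+1 Hsz).
have Ty : \sum_(i < n.+1) poch (alpha + 1) i * y`_i =
   A0 alpha M N n * \sum_(i < n.+1) poch (alpha+1) i * (laguerre n alpha)`_i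
 + A1 alpha M N n * \sum_(i < n.+1) poch (alpha+1) i * (laguerre n alpha)^`()`_i
 + A2 alpha M N n * \sum_(i < n.+1) poch (alpha+1) i * (laguerre n alpha)^`(2)`_i.
  rewrite !big_distrr -!big_split /=; apply: eq_bigr => i _.
  rewrite /y /laguerreMN !coefD !coefZ; ring.
have Y0 : y`_0 = A0 alpha M N n * (laguerre n alpha)`_0 + A1 alpha M N n * (laguerre n alpha)`_1 + A2 alpha M N n * ((laguerre n alpha)`_2 *+ 2).
  by rewrite /y /laguerreMN !coefD !coefZ coef_deriv coef_derivn2 mulr1n.
rewrite Ty Y0 {Ty Y0 Eb Ec Hsz hK y}.
case: n hn => [//|m] _.
rewrite TL0 TL1 (@TL2 R m.+1 alpha (ltn0Sn m)) /= !lag_coef /=.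
rewrite /A0 /A1 /A2 expr0 expr1 fact0 subn0 /=.
case: m => [|m].
  have z : forall b : R, gbinomz b (1%Z - 2) = 0 by [].
  rewrite !z subnn !gbinom0 /= gbinom1 mul0rn (_ : 1`! = 1%N) //.
  have ha1 : alpha + 1 != 0 by apply/eqP; lra.
  have ha2 : alpha + 2 != 0 by apply/eqP; lra.
  have ha3 : alpha + 3 != 0 by apply/eqP; lra.
  field.
  by rewrite ha1 ha2 ha3.
rewrite !a2 !subn1 subn2 /= (_ : 2`! = 2%N) // (_ : 1`! = 1%N) //.
have ha1 : alpha + 1 != 0 by apply/eqP; lra.
have ha2 : alpha + 2 != 0 by apply/eqP; lra.
have ha3 : alpha + 3 != 0 by apply/eqP; lra.
set a := m.+2%:R + alpha.
have e1 : a - m%:R = alpha + 2 by rewrite /a -!natr1; ring.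
have e2 : a - m.+1%:R = alpha + 1 by rewrite /a -!natr1; ring.
have e3 : a + 1 - m%:R = alpha + 3 by rewrite /a -!natr1; ring.
have g1 : gbinom a m.+1 = gbinom a m * (alpha + 2) / (m.+1)%:R.
  by rewrite -e1 -gbinomS mulfK // natS_neq0.
have g2 : gbinom a m.+2 = gbinom a m.+1 * (alpha + 1) / (m.+2)%:R.
  by rewrite -e2 -gbinomS mulfK // natS_neq0.
have h0 : gbinom (a + 1) m = gbinom a m * (a + 1) / (alpha + 3).
  by rewrite -e3 -gbinom_up mulfK // e3.
have h1 : gbinom (a + 1) m.+1 = gbinom (a + 1) m * (alpha + 3) / (m.+1)%:R.
  by rewrite -e3 -gbinomS mulfK // natS_neq0.
rewrite h1 h0 g2 g1 /a.
have t0 : 0 <= (m%:R : R) by rewrite ler0n.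
rewrite -!natr1.
field.
by rewrite ha1 ha2 ha3 !natr1 !natS_neq0.
Qed.
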